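(* The binary relation $<$ on $\mathrm{Ord}$ is well-founded: for every property $P$ of elements of $\mathrm{Ord}$ such that $P(\alpha)$ holds whenever $P(\gamma)$ holds for all $\gamma<\alpha$, $P$ holds for all $\alpha\in\mathrm{Ord}$ (and more generally constructions by $<$-induction are possible).
   Context: Work constructively. Let $\mathfrak F$ be a set of index sets containing $\mathbb N$ and each $\mathbb N_k=\{n\in\mathbb N:n<k\}$ ($k\ge0$), closed (up to isomorphism) under finitely enumerated subsets, sets of finitely enumerated subsets, and disjoint unions indexed by elements of $\mathfrak F$. A finitely enumerated subset of $A$ is one given by a map $\mathbb N_k\to A$; write $F\subseteq_f I$. The set $\mathrm{ord}$ is inductively generated by $\underline 0$ and, for every family $(\alpha_i)_{i\in I}$ with $I\in\mathfrak F$, $\alpha_i\in\mathrm{ord}$, an element $\mathrm S(\alpha_i)_{i\in I}$; for such $\alpha$, $I_\alpha=I$ and $\alpha_i$ are its definitional subordinals; $I_{\underline 0}=\emptyset$. For a finite list $F$ in $I_\alpha$, $\alpha_F$ is the list of the $\alpha_i$, $i\in F$. Relations between an element and a nonempty finite list, by simultaneous induction: $\alpha\le\beta^1,\dots,\beta^m$ means $\alpha_i<\beta^1,\dots,\beta^m$ for all $i\in I_\alpha$; $\alpha<\beta^1,\dots,\beta^m$ means there exist $F_1\subseteq_f I_{\beta^1},\dots,F_m\subseteq_f I_{\beta^m}$, not all empty, with $\alpha\le\beta^1_{F_1},\dots,\beta^m_{F_m}$; $\alpha\le\beta$, $\alpha<\beta$ are the case $m=1$. $\alpha=_{\mathrm{Ord}}\beta$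 means $\alpha\le\beta$ and $\beta\le\alpha$; it is an equivalence relation compatible with $\le$ and $<$, and $\mathrm{Ord}$ is the quotient with the induced relations. *)

(* Defs.v *)
From mathcomp Require Import all_boot.

Set Implicit Arguments.
Unset Strict Implicit.
Unset Printing Implicit Defensive.

(* N_k = {n : nat | n < k} is MathComp's 'I_k. *)

(* A finitely enumerated subset of A: a map N_k -> A. *)
Definition fsub (A : Type) : Type := {k : nat & 'I_k -> A}.

Definition fsub_list (A : Type) (F : fsub A) : seq A :=
  map (projT2 F) (enum 'I_(projT1 F)).

Definition fsub_set (A : Type) (F : fsub A) : Type :=
  {a : A | exists j, projT2 F j = a}.

Definition iso (A B : Type) : Prop :=
  exists (f : A -> B) (g : B -> A), cancel f g /\ cancel g f.

(* A family 𝔉 of index sets, given as codes U with decoding El, satisfying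
   the closure conditions (up to isomorphism). *)
Record IndexFamily (U : Type) (El : U -> Type) : Prop := {
  IF_nat : exists u, iso (El u) nat;
  IF_Nk : forall k : nat, exists u, iso (El u) 'I_k;
  IF_fsub : forall (u : U) (F : fsub (El u)), exists v, iso (El v) (fsub_set F);
  IF_fsubs : forall u : U, exists v, iso (El v) (fsub (El u));
  IF_sigma : forall (u : U) (J : El u -> U),
      exists v, iso (El v) {i : El u & El (J i)}
}.

Section Ordinals.
Variables (U : Type) (El : U -> Type).

Inductive ord : Type :=
  | zero_ord : ord
  | S_ord (I : U) (alpha : El I -> ord) : ord.

Definition idx (a : ord) : Type :=
  match a with zero_ord => Empty_set | S_ord J _ => El J end.

Definition sub (a : ord) : idx a -> ord :=
  match a as a0 return idx a0 -> ord with
  | zero_ord => fun e => match e with end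
  | S_ord J f => f
  end.

(* A choice of F_1 ⊆_f I_{beta^1}, ..., F_m ⊆_f I_{beta^m}. *)
Fixpoint sel (bs : seq ord) : Type :=
  match bs with
  | [::] => unit
  | b :: bs' => (fsub (idx b) * sel bs')%type
  end.

Fixpoint sel_list (bs : seq ord) : sel bs -> seq ord :=
  match bs as bs0 return sel bs0 -> seq ord with
  | [::] => fun _ => [::]
  | b :: bs' => fun s => map (@sub b) (fsub_list s.1) ++ sel_list s.2
  end.

Fixpoint sel_not_all_empty (bs : seq ord) : sel bs -> Prop :=
  match bs as bs0 return sel bs0 -> Prop with
  | [::] => fun _ => False
  | b :: bs' => fun s => projT1 s.1 <> 0 \/ sel_not_all_empty s.2
  end.

(* "alpha < bs" expressed from the relation "alpha <= _". *)
Definition lt_from (le_a : seq ord -> Prop) (bs : seq ord) : Prop :=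
  exists s : sel bs, sel_not_all_empty s /\ le_a (sel_list s).

Fixpoint ord_le (a : ord) (bs : seq ord) : Prop :=
  match a with
  | zero_ord => True
  | S_ord J f => forall i : El J, lt_from (ord_le (f i)) bs
  end.

Definition ord_lt (a : ord) (bs : seq ord) : Prop := lt_from (ord_le a) bs.

Definition ord_le1 (a b : ord) : Prop := ord_le a [:: b].
Definition ord_lt1 (a b : ord) : Prop := ord_lt a [:: b].

(* =_Ord ; Ord is the quotient (setoid) of ord by this relation. *)
Definition ord_eq (a b : ord) : Prop := ord_le1 a b /\ ord_le1 b a.

End Ordinals.

(* Main.v *)
From Stdlib Require Import Lia.
Require Import Defs.
From mathcomp Require Import all_boot.
From Stdlib Require List.

Definition Imm {U : Type} {El : U -> Type} (bs : seq (ord El)) (c : ord El) : Prop :=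
  exists b, List.In b bs /\ exists i : idx b, c = sub i.

Lemma in_cat' {A : Type} (x : A) (s1 s2 : seq A) :
  List.In x (s1 ++ s2) <-> List.In x s1 \/ List.In x s2.
Proof.
elim: s1 => [|a s IH] /=; first by intuition.
rewrite IH; intuition.
Qed.

Lemma in_map' {A B : Type} (f : A -> B) x (s : seq A) :
  List.In x (map f s) <-> exists y, List.In y s /\ x = f y.
Proof.
elim: s => [|a s IH] /=; first by split; [done| case=> y []].
rewrite IH; split.
- case=> [<-|[y [Hy ->]]]; [exists a; auto | exists y; auto].
- case=> y [[<-|Hy] ->]; [left; auto | right; exists y; auto].
Qed.

Definition fsub_of_seq {A : Type} (l : seq A) : fsub A :=
  existT _ (size l) (tnth (in_tuple l)).

Lemma fsub_of_seqK {A : Type} (l : seq A) : fsub_list (fsub_of_seq l) = l.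
Proof. by rewrite /fsub_list /= map_tnth_enum. Qed.

Lemma sel_ne {U : Type} {El : U -> Type} (bs : seq (ord El)) (s : sel bs) :
  sel_not_all_empty s <-> sel_list s <> [::].
Proof.
elim: bs s => [|b bs IH] /= s; first by split => //; case.
case: s => F s /=; rewrite IH.
have E : forall (T : Type) (l : seq T), l <> [::] <-> size l <> 0.
  by move=> T [|x l].
rewrite !E size_cat size_map /fsub_list size_map size_enum_ord.
rewrite -plusE; lia.
Qed.

Lemma sel_fwd {U : Type} {El : U -> Type} (bs : seq (ord El)) (s : sel bs) c :
  List.In c (sel_list s) -> Imm bs c.
Proof.
elim: bs s => [|b bs IH] /= s; first done.
case: s => F s /=; rewrite in_cat' in_map'.
case=> [[i [_ ->]]|H].
- exists b; split; [left; done | exists i; done].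
- case: (IH s H) => b' [Hb' Hi]; exists b'; split; [right; done | done].
Qed.

Lemma sel_empty {U : Type} {El : U -> Type} (bs : seq (ord El)) :
  exists s : sel bs, sel_list s = [::].
Proof.
elim: bs => [|b bs [s Hs]] /=; first by exists tt.
exists (fsub_of_seq [::], s) => /=; by rewrite fsub_of_seqK Hs.
Qed.

Lemma sel_add {U : Type} {El : U -> Type} (bs : seq (ord El)) (s : sel bs) c :
  Imm bs c -> exists s' : sel bs,
    forall x, List.In x (sel_list s') <-> x = c \/ List.In x (sel_list s).
Proof.
elim: bs s => [|b bs IH] /= s; first by case=> b [].
case: s => F s /= [b0 [[Eb|Hb] [i Ei]]].
- subst b0 c.
  exists (fsub_of_seq (i :: fsub_list F), s) => x /=.
  rewrite fsub_of_seqK /= !in_cat'; intuition.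
- have [s2 Hs2] : exists s2 : sel bs, forall x,
      List.In x (sel_list s2) <-> x = c \/ List.In x (sel_list s).
    apply: IH; exists b0; split; [done | exists i; done].
  exists (F, s2) => x /=; rewrite !in_cat' Hs2; intuition.
Qed.
Arguments sel_add {U El bs} s {c}.

Lemma sel_bwd {U : Type} {El : U -> Type} (bs : seq (ord El)) (cs : seq (ord El)) :
  (forall c, List.In c cs -> Imm bs c) ->
  exists s : sel bs, forall x, List.In x (sel_list s) <-> List.In x cs.
Proof.
elim: cs => [|c cs IH] H.
- case: (sel_empty bs) => s Hs; exists s => x; rewrite Hs; done.
- case: IH => [x Hx|s Hs]; first by apply: H; right.
  case: (sel_add s (H c (or_introl erefl))) => s' Hs'.
  exists s' => x; rewrite Hs' Hs /=; intuition.
Qed.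
Arguments sel_bwd {U El bs cs}.

Lemma lt_char {U : Type} {El : U -> Type} (P : seq (ord El) -> Prop) bs :
  lt_from P bs -> exists cs, cs <> [::] /\ (forall c, List.In c cs -> Imm bs c) /\ P cs.
Proof.
case=> s [Hne HP]; exists (sel_list s); split; first by apply/sel_ne.
split; last done; move=> c; apply: sel_fwd.
Qed.
Arguments lt_char {U El P bs}.

Lemma lt_char_back {U : Type} {El : U -> Type} (P : seq (ord El) -> Prop) bs cs :
  cs <> [::] -> (forall c, List.In c cs -> Imm bs c) ->
  (forall ys, (forall x, List.In x ys <-> List.In x cs) -> P ys) -> lt_from P bs.
Proof.
move=> Hne Himm HP; case: (sel_bwd Himm) => s Hs.
exists s; split; last by apply: HP.
apply/sel_ne => E; move: Hne; case: cs Himm HP Hs => [|c cs] // _ _ Hs _.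
by move: (proj2 (Hs c) (or_introl erefl)); rewrite E.
Qed.
Arguments lt_char_back {U El P bs cs}.

Lemma mono {U : Type} {El : U -> Type} (d : ord El) xs ys :
  ord_le d xs -> (forall x, List.In x xs -> List.In x ys) -> ord_le d ys.
Proof.
elim: d xs ys => [|I f IH] xs ys //= H Hinc i.
case: (lt_char (H i)) => cs [ne [imm le]].
apply: (lt_char_back ne).
- move=> c /imm [b [Hb Hi]]; exists b; split; [exact: Hinc | done].
- move=> ys0 Hys0; apply: (IH i cs) => // x; rewrite Hys0; exact: id.
Qed.
Arguments mono {U El d xs ys}.

Lemma sub_lt {U : Type} {El : U -> Type} (y : ord El) Z :
  ord_le y Z -> forall j : idx y, lt_from (ord_le (sub j)) Z.
Proof. case: y => [|I g] /= H j; [case: j | exact: H]. Qed.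
Arguments sub_lt {U El y Z}.

Lemma collect {U : Type} {El : U -> Type} (Z : seq (ord El)) cs :
  (forall c, List.In c cs -> exists ws, ws <> [::] /\
      (forall w, List.In w ws -> Imm Z w) /\ ord_le c ws) ->
  exists W, (cs <> [::] -> W <> [::]) /\ (forall w, List.In w W -> Imm Z w) /\
    (forall c, List.In c cs -> ord_le c W).
Proof.
elim: cs => [|c cs IH] H.
- exists [::]; split; first done; split; done.
- case: IH => [x Hx|W [_ [HW HcW]]]; first by apply: H; right.
  case: (H c (or_introl erefl)) => ws [ne [Hws le]].
  exists (ws ++ W); split.
    by move=> _; case: ws ne {Hws le}.
  split.
  + by move=> w /in_cat' [/Hws|/HW].
  + move=> x [<-|Hx].
    * apply: (mono le) => y Hy; apply/in_cat'; auto.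
    * apply: (mono (HcW x Hx)) => y Hy; apply/in_cat'; auto.
Qed.

Lemma trans_le {U : Type} {El : U -> Type} (e : ord El) ys Z :
  ord_le e ys -> (forall y, List.In y ys -> ord_le y Z) -> ord_le e Z.
Proof.
elim: e ys Z => [|I f IH] ys Z //= H HZ i.
case: (lt_char (H i)) => cs [ne [imm le]].
have [W [HWne [HW HcW]]] := @collect U El Z cs (fun c Hc =>
  match imm c Hc with ex_intro b (conj Hb (ex_intro j Ej)) =>
    lt_char (eq_ind_r (fun c => lt_from (ord_le c) Z) (sub_lt (HZ b Hb) j) Ej)
  end).
apply: (lt_char_back (HWne ne) HW) => ys0 Hys0.
apply: (IH i cs) => // c Hc; apply: (mono (HcW c Hc)) => x; rewrite Hys0; exact: id.
Qed.
Arguments trans_le {U El e ys Z}.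

Definition Step {U : Type} {El : U -> Type} (C xs : seq (ord El)) : Prop :=
  C <> [::] /\ forall c, List.In c C -> Imm xs c.

Lemma acc_set {U : Type} {El : U -> Type} (xs ys : seq (ord El)) :
  Acc Step xs -> (forall x, List.In x xs <-> List.In x ys) -> Acc Step ys.
Proof.
case=> H Hiff; constructor => C [ne HC]; apply: H; split => // c /HC [b [Hb Hi]].
exists b; split; [by apply/Hiff | done].
Qed.
Arguments acc_set {U El xs ys}.

Lemma acc_nil {U : Type} {El : U -> Type} : Acc (@Step U El) [::].
Proof.
constructor => C' [ne HC']; case: C' ne HC' => [|c' C'] ne HC'.
- by case: ne.
- by case: (HC' c' (or_introl erefl)) => b [].
Qed.

Lemma acc_sub {U : Type} {El : U -> Type} (ys C : seq (ord El)) :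
  Acc Step ys -> (forall c, List.In c C -> Imm ys c) -> Acc Step C.
Proof.
case: C => [|c C] Hys H.
- exact: acc_nil.
- case: Hys => Hys; apply: Hys; split => //.
Qed.
Arguments acc_sub {U El ys C}.

Lemma acc_app {U : Type} {El : U -> Type} (xs : seq (ord El)) :
  Acc Step xs -> forall ys, Acc Step ys -> Acc Step (xs ++ ys).
Proof.
elim=> {}xs _ IH ys Hys; constructor => C [ne HC].
have [C1 [C2 [H1 [H2 H12]]]] : exists C1 C2,
    (forall c, List.In c C1 -> Imm xs c) /\ (forall c, List.In c C2 -> Imm ys c) /\
    (forall x, List.In x (C1 ++ C2) <-> List.In x C).
  elim: C {ne} HC => [|c C IHC] HC.
    by exists [::], [::].
  case: IHC => [x Hx|C1 [C2 [H1 [H2 H12]]]]; first by apply: HC; right.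
  case: (HC c (or_introl erefl)) => b [/in_cat' [Hb|Hb] Hi].
  + exists (c :: C1), C2; split; last split.
    * move=> x [<-|Hx]; [exists b; split; done | exact: H1].
    * done.
    * move=> x /=; rewrite -H12; intuition.
  + exists C1, (c :: C2); split; last split.
    * done.
    * move=> x [<-|Hx]; [exists b; split; done | exact: H2].
    * move=> x; rewrite in_cat' /= -H12 in_cat'; intuition.
apply: (acc_set _ H12).
have HC2 := acc_sub Hys H2.
case: C1 H1 {H12} => [|c1 C1] H1; first exact: HC2.
apply: (IH (c1 :: C1)) => //; split => //.
Qed.
Arguments acc_app {U El xs}.

Lemma acc_all {U : Type} {El : U -> Type} (C : seq (ord El)) :
  (forall c, List.In c C -> Acc Step [:: c]) -> Acc Step C.
Proof.
elim: C => [|c C IH] H.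
- exact: acc_nil.
- exact: (acc_app (H c (or_introl erefl)) C (IH (fun x Hx => H x (or_intror Hx)))).
Qed.
Arguments acc_all {U El C}.

Lemma acc_single {U : Type} {El : U -> Type} (x : ord El) : Acc Step [:: x].
Proof.
elim: x => [|I f IH]; constructor => C [ne HC]; apply: acc_all => c /HC [b [[<-|[]] [i ->]]].
- case: i.
- exact: IH.
Qed.

Lemma good {U : Type} {El : U -> Type} (xs : seq (ord El)) :
  Acc Step xs -> forall d, ord_le d xs -> Acc (@ord_lt1 U El) d.
Proof.
elim=> {}xs _ IH d Hd; constructor => e He.
case: (lt_char He) => cs [ne [imm le]].
have [W [HWne [HW HcW]]] := @collect U El xs cs (fun c Hc =>
  match imm c Hc with ex_intro b (conj Hb (ex_intro j Ej)) =>
    lt_char (eq_ind_r (fun c => lt_from (ord_le c) xs)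
      (sub_lt (match Hb with or_introl E => eq_ind d (fun b => ord_le b xs) Hd b E
               | or_intror F => match F with end end) j) Ej)
  end).
apply: (IH W); first by split; [exact: HWne | exact: HW].
exact: (trans_le le HcW).
Qed.
Arguments good {U El xs} _ {d}.

Theorem proposition4p11 (U : Type) (El : U -> Type) (HF : IndexFamily El) :
  well_founded (@ord_lt1 U El) /\
  (forall P : ord El -> Prop,
     (forall a b : ord El, ord_eq a b -> P a -> P b) ->
     (forall a : ord El, (forall c : ord El, ord_lt1 c a -> P c) -> P a) ->
     forall a : ord El, P a).
Proof.
have wf : well_founded (@ord_lt1 U El).
  move=> a; constructor => d Hd.
  case: (lt_char Hd) => cs [ne [imm le]].
  apply: (good _ le); apply: acc_all => c _; exact: acc_single.
split; first exact: wf.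
move=> P _ Hind; exact: (well_founded_ind wf P Hind).
Qed.
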